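(* The graphs $P_4+P_3$ and $2P_2+C_3$ are of class $\mathcal C_1$.
   Context: All graphs are finite, simple and undirected. $C_n$ and $P_n$ denote the cycle and the path on $n$ vertices; $kG$ denotes the disjoint union of $k$ copies of $G$. The join $G+H$ is obtained from vertex-disjoint copies of $G$ and $H$ by adding all edges between $V(G)$ and $V(H)$. A drawing is 1-planar if each edge is crossed at most once (adjacent edges never cross, no edge crosses itself); a graph is 1-planar if it has such a drawing. For a 1-planar drawing $D$, $D^\times$ is the plane graph obtained by turning each crossing into a new degree-4 vertex (a false vertex); $N_{D^\times}(c)$ is the neighbour set of a false vertex $c$. A 1-planar graph is of class $\mathcal C_0$ if it has a 1-planar drawing with $|N_{D^\times}(c_1)\cap N_{D^\times}(c_2)|=0$ for all distinct false vertices; it is of class $\mathcal C_1$ if it is not of class $\mathcal C_0$ and it has a 1-planar drawing with $|N_{D^\times}(c_1)\cap N_{D^\times}(c_2)|\le 1$ for all distinct false vertices $c_1,c_2$. *)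

(* Defs.v *)
From mathcomp Require Import all_boot perm.
Set Implicit Arguments. Unset Strict Implicit. Unset Printing Implicit Defensive.

Definition path_rel (n : nat) : rel 'I_n :=
  fun i j => (i.+1 == j :> nat) || (j.+1 == i :> nat).

Definition cycle_rel (n : nat) : rel 'I_n :=
  fun i j => (i != j) && ((i.+1 %% n == j :> nat) || (j.+1 %% n == i :> nat)).

Definition dunion (A B : finType) (e1 : rel A) (e2 : rel B) : rel (A + B) :=
  fun x y => match x, y with
  | inl u, inl v => e1 u v
  | inr u, inr v => e2 u v
  | _, _ => false
  end.

Definition gjoin (A B : finType) (e1 : rel A) (e2 : rel B) : rel (A + B) :=
  fun x y => match x, y with
  | inl u, inl v => e1 u v
  | inr u, inr v => e2 u v
  | _, _ => true
  end.

Definition dart_rev (T : Type) (p : T * T) : T * T := (p.2, p.1).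

Definition darts (T : finType) (e : rel T) : {set T * T} := [set p | e p.1 p.2].

Definition nonisolated (T : finType) (e : rel T) : {set T} :=
  [set x | [exists y, e x y]].

Definition nfaces (T : finType) (e : rel T) (s : {perm T * T}) : nat :=
  #|[set [set q in darts e | fconnect (fun p => s (dart_rev p)) p q]
      | p in darts e]|.

Definition map_step (T : finType) (s : {perm T * T}) : rel (T * T) :=
  fun p q => (q == s p) || (q == dart_rev p).

Definition ncomps (T : finType) (e : rel T) (s : {perm T * T}) : nat :=
  #|[set [set q in darts e | connect (map_step s) p q] | p in darts e]|.

(* s is a rotation system of e (cyclic order of the darts at every vertex)
   all of whose components have genus 0 (Euler: V - E + F = 2 per component). *)
Definition plane_rotation (T : finType) (e : rel T) (s : {perm T * T}) : Prop :=
  [/\ forall p, ~~ e p.1 p.2 -> s p = p,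
      forall p, (s p).1 = p.1,
      forall p q, p \in darts e -> q \in darts e -> p.1 = q.1 -> fconnect s p q &
      2 * #|nonisolated e| + 2 * nfaces e s = #|darts e| + 4 * ncomps e s].

Definition planar (T : finType) (e : rel T) : Prop := exists s, plane_rotation e s.

(* ---------- 1-planar drawings, described by their crossings.
   A drawing with k crossings: crossing i is the crossing of edge {a i, b i}
   with edge {c i, d i}.  D^x is the planarization. *)

Definition falseN (V : finType) k (a b c d : 'I_k -> V) (i : 'I_k) : {set V} :=
  [set a i; b i; c i; d i].

Definition crossed_edges (V : finType) k (a b c d : 'I_k -> V) : seq {set V} :=
  flatten [seq [:: [set a i; b i]; [set c i; d i]] | i <- enum 'I_k].

Definition planarization (V : finType) (e : rel V) k (a b c d : 'I_k -> V)
  : rel (V + 'I_k) :=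
  fun x y => match x, y with
  | inl u, inl v => e u v && ([set u; v] \notin crossed_edges a b c d)
  | inl u, inr i => u \in falseN a b c d i
  | inr i, inl u => u \in falseN a b c d i
  | inr _, inr _ => false
  end.

Definition one_planar_drawing (V : finType) (e : rel V) k (a b c d : 'I_k -> V)
  : Prop :=
  [/\ forall i, e (a i) (b i) && e (c i) (d i),
      forall i, uniq [:: a i; b i; c i; d i],
      uniq (crossed_edges a b c d) &
      planar (planarization e a b c d)].

Definition has_drawing_le (V : finType) (e : rel V) (m : nat) : Prop :=
  exists k (a b c d : 'I_k -> V), one_planar_drawing e a b c d /\
    forall i j, i != j -> #|falseN a b c d i :&: falseN a b c d j| <= m.

Definition class_C0 (V : finType) (e : rel V) : Prop := has_drawing_le e 0.

Definition class_C1 (V : finType) (e : rel V) : Prop :=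
  ~ class_C0 e /\ has_drawing_le e 1.

Arguments path_rel n : clear implicits.
Arguments cycle_rel n : clear implicits.

(* Main.v *)
Require Import Defs.
From mathcomp Require Import all_boot perm zify.
From Stdlib Require Import FunctionalExtensionality.
Set Implicit Arguments. Unset Strict Implicit. Unset Printing Implicit Defensive.

Definition mkord n m : option 'I_n :=
  match (m < n) as b return (m < n) = b -> option 'I_n with
  | true => fun H => Some (Ordinal H) | false => fun _ => None end erefl.

Lemma mkordE n m : mkord n m = insub m.
Proof.
rewrite /mkord; case: insubP => [i Hi Ei|/negbTE Hm].
  suff H : forall b (E : (m < n) = b), b = true -> match b as b0 return (m < n) = b0 -> option 'I_n with
  | true => fun H => Some (Ordinal H) | false => fun _ => None end E = Some i.
    exact: H.
  move=> b E; case: b E => // E _; congr Some; apply: val_inj; by rewrite /= Ei.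
suff H : forall b (E : (m < n) = b), b = false -> match b as b0 return (m < n) = b0 -> option 'I_n with
  | true => fun H => Some (Ordinal H) | false => fun _ => None end E = None.
  exact: H.
by move=> b E; case: b E => // E; rewrite E in Hm.
Qed.

Definition ords n : seq 'I_n := pmap (@mkord n) (iota 0 n).

Lemma ordsE n : ords n = ord_enum n.
Proof. by rewrite /ords /ord_enum; apply: eq_pmap => m; rewrite mkordE. Qed.

Definition enumerates (X : finType) (l : seq X) := uniq l /\ forall x, x \in l.

Lemma ords_enum n : enumerates (ords n).
Proof. by rewrite ordsE; split; [exact: ord_enum_uniq | exact: mem_ord_enum]. Qed.

Lemma sum_enumerates (A B : finType) (la : seq A) (lb : seq B) :
  enumerates la -> enumerates lb -> enumerates (map inl la ++ map inr lb : seq (A + B)).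
Proof.
move=> [ua ta] [ub tb]; split.
  rewrite cat_uniq !map_inj_uniq //; last by move=> ?? [].
  + rewrite ua ub /= andbT; apply/hasP => -[x /mapP [y _ ->] /mapP [z _]] //.
  + by move=> ?? [].
by case=> x; rewrite mem_cat; [rewrite map_f | rewrite orbC map_f].
Qed.

Lemma pair_enumerates (A : finType) (l : seq A) :
  enumerates l -> enumerates (allpairs pair l l).
Proof.
move=> [ul tl]; split.
  by apply: allpairs_uniq => // -[? ?] [? ?] _ _ /=.
by case=> x y; apply: allpairs_f.
Qed.

Lemma card_count (X : finType) (l : seq X) (A : {pred X}) :
  enumerates l -> #|A| = count (mem A) l.
Proof.
move=> [ul tl]; rewrite -size_filter.
have -> : #|A| = #|[seq x <- l | x \in A]|.
  by apply: eq_card => x; rewrite mem_filter tl andbT.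
by apply/card_uniqP; rewrite filter_uniq.
Qed.

Lemma all_enum (X : finType) (l : seq X) (P : pred X) :
  enumerates l -> all P l -> forall x, P x.
Proof. by move=> [_ tl] /allP H x; apply: H. Qed.

Lemma enum_size (X : finType) (l : seq X) : enumerates l -> #|X| = size l.
Proof. by move=> El; rewrite (card_count _ El) count_predT. Qed.

Lemma connect_sym_loc (X : finType) (r : rel X) :
  (forall x y, r x y -> connect r y x) -> forall x y, connect r x y -> connect r y x.
Proof.
move=> h x y /connectP [p pth ->]; elim: p x pth => [|z p IH] x /=; first by move=> _; exact: connect0.
case/andP => rxz pz; apply: connect_trans (IH _ pz) (h _ _ rxz).
Qed.

Section Euler.
Variables (T : finType) (e : rel T).
Hypotheses (e_sym : symmetric e) (eirr : irreflexive e)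
  (noiso : forall x y, e x y -> exists2 z, z != y & e x z).

Lemma euler_bound : planar e -> forall p0 : T * T, e p0.1 p0.2 ->
  #|darts e| + 12 <= 6 * #|nonisolated e|.
Proof.
move=> [s [H1 H2 H3 H4]] p0 ep0.
set D := darts e.
have inD p : (p \in D) = e p.1 p.2 by rewrite inE.
have sD p : p \in D -> s p \in D.
  move=> Dp; apply/negPn/negP => nD.
  have := H1 (s p); rewrite -inD => /(_ nD) /perm_inj Esp.
  by rewrite Esp Dp in nD.
have revK : involutive (@dart_rev T) by case.
have revD p : p \in D -> dart_rev p \in D by rewrite !inD /= e_sym.
set phi := fun p => s (dart_rev p).
have phi_inj : injective phi by move=> p q /perm_inj /(can_inj revK).
have phiD p : p \in D -> phi p \in D by move=> /revD /sD.
have phi1 p : (phi p).1 = p.2 by rewrite /phi H2.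
have neq12 p : p \in D -> p.1 != p.2.
  by rewrite inD; apply: contraTneq => ->; rewrite eirr.
have fsym : connect_sym (frel phi) by move=> x y; apply: fconnect_sym.
set F := fun p => [set q in D | fconnect phi p q].
have F3 p : p \in D -> 3 <= #|F p|.
  move=> Dp; set q1 := phi p; set q2 := phi q1.
  have Dq1 : q1 \in D by apply: phiD.
  have Dq2 : q2 \in D by apply: phiD.
  have n01 : p != q1.
    by apply: contraNneq (neq12 _ Dp) => E; rewrite {1}E /q1 phi1.
  have n12 : q1 != q2.
    by apply: contraNneq (neq12 _ Dq1) => E; rewrite {1}E /q2 phi1.
  have n02 : p != q2.
    apply/eqP => E.
    have Eq1 : q1 = dart_rev p.
      have e1 : q1.1 = p.2 by rewrite /q1 phi1.
      have e2 : q2.1 = q1.2 by rewrite /q2 phi1.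
      by rewrite (surjective_pairing q1) e1 -e2 -E.
    have sp : s p = p by rewrite {2}E /q2 Eq1 /phi revK.
    have euv : e p.1 p.2 by rewrite -inD.
    have [z nzv euz] := noiso euv.
    have Dz : (p.1, z) \in D by rewrite inD.
    move: (H3 _ _ Dp Dz erefl) => /iter_findex; rewrite iter_fix // => Ez.
    by move: nzv; rewrite Ez /= eqxx.
  have -> : 3 = #|[:: p; q1; q2]| by apply/esym/card_uniqP; rewrite /= !inE negb_or n01 n02 n12.
  apply: subset_leq_card; apply/subsetP => x; rewrite !inE => /or3P [] /eqP ->; apply/andP; split; rewrite -?inD //.
  - exact: fconnect1.
  - exact: (fconnect_iter _ 2).
have Hpart : partition (equivalence_partition (fconnect phi) D) D.
  apply: equivalence_partitionP => x y z _ _ _; split; first exact: connect0.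
  by move=> Hxy; rewrite (same_connect fsym Hxy).
have Hsum := card_partition Hpart.
have HF : 3 * nfaces e s <= #|D|.
  rewrite Hsum mulnC -sum_nat_const; apply: leq_sum => A /imsetP [p Dp ->].
  exact: F3.
have HC : 0 < ncomps e s.
  apply/card_gt0P; exists [set q in D | connect (map_step s) p0 q]; apply: imset_f.
  by rewrite inD.
rewrite -/D in H4 *; lia.
Qed.

End Euler.

Lemma count_classes (X : finType) (D : {set X}) (R : rel X) (L : seq X) :
  enumerates L -> {in D & &, equivalence_rel R} ->
  #|[set [set q in D | R p q] | p in D]| =
  count (fun p => (p \in D) && all (fun q => (q \in D) ==> R p q ==> (index p L <= index q L)) L) L.
Proof.
move=> EL eqR; have [uL tL] := EL.
set rep := fun p => (p \in D) && all (fun q => (q \in D) ==> R p q ==> (index p L <= index q L)) L.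
have refl p : p \in D -> R p p by move=> Dp; exact: (eqR p p p Dp Dp Dp).1.
have sym p q : p \in D -> q \in D -> R p q -> R q p.
  by move=> Dp Dq Rpq; rewrite -((eqR p q p Dp Dq Dp).2 Rpq) refl.
have trans p q r : p \in D -> q \in D -> r \in D -> R p q -> R q r -> R p r.
  by move=> Dp Dq Dr Rpq Rqr; rewrite ((eqR p q r Dp Dq Dr).2 Rpq).
transitivity #|[set p | rep p]|; last first.
  by rewrite (card_count _ EL); apply: eq_count => p; rewrite !inE.
set F := fun p => [set q in D | R p q].
have -> : [set F p | p in D] = F @: [set p | rep p].
  apply/setP => A; apply/imsetP/imsetP => -[p Hp ->]; last first.
    by rewrite inE in Hp; case/andP: Hp => Dp _; exists p.
  have Pp : (p \in D) && R p p by rewrite Hp refl.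
  have [r /andP[Dr Rpr] minr] := @arg_minnP _ p (fun r => (r \in D) && R p r) (fun r => index r L) Pp.
  exists r.
    rewrite inE /rep Dr /=; apply/allP => q _; apply/implyP => Dq; apply/implyP => Rrq.
    by apply: minr; rewrite Dq (trans p r q).
  apply/setP => q; rewrite !inE; case Dq: (q \in D) => //=.
  by rewrite ((eqR p r q Hp Dr Dq).2 Rpr).
rewrite card_in_imset // => p q; rewrite !inE => /andP[Dp /allP Ap] /andP[Dq /allP Aq] Epq.
have Rpq : R p q.
  have : q \in F q by rewrite inE Dq refl.
  by rewrite -Epq inE => /andP[_].
have Rqp := sym _ _ Dp Dq Rpq.
have h1 := Ap q (tL q); have h2 := Aq p (tL p).
rewrite Dq Rpq /= in h1; rewrite Dp Rqp /= in h2.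
have E : index p L = index q L by apply/eqP; rewrite eqn_leq h1 h2.
by rewrite -(nth_index p (tL p)) E nth_index.
Qed.

Lemma uniq_map_inj (X Y : finType) (L : seq X) (f : X -> Y) :
  enumerates L -> uniq (map f L) -> injective f.
Proof.
move=> [_ tL] U x y E.
have ix : index x L < size L by rewrite index_mem tL.
have iy : index y L < size L by rewrite index_mem tL.
have : nth (f x) (map f L) (index x L) == nth (f x) (map f L) (index y L).
  by rewrite !(nth_map x) // !nth_index ?tL // E.
rewrite nth_uniq ?size_map // => /eqP Ei.
by rewrite -(nth_index x (tL x)) Ei nth_index.
Qed.

Lemma fconnect_traject (Y : finType) (g : Y -> Y) N x y :
  #|Y| <= N -> fconnect g x y = (y \in traject g x N).
Proof.
move=> HN; apply/idP/idP.
  move=> Hc; apply/trajectP; exists (findex g x y); last by rewrite iter_findex.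
  apply: leq_trans (findex_max Hc) (leq_trans _ HN).
  by rewrite -size_orbit -(card_uniqP (orbit_uniq g x)); apply: max_card.
by move/trajectP => [i _ ->]; exact: fconnect_iter.
Qed.

Definition reach (T : finType) (f : T * T -> T * T) n (p0 : T * T) :=
  iter n (fun l => undup (l ++ flatten [seq [:: f x; dart_rev x] | x <- l])) [:: p0].

Lemma reach_sound (T : finType) (s : {perm T * T}) f p0 :
  s =1 f -> forall n q, q \in reach f n p0 -> connect (map_step s) p0 q.
Proof.
move=> sf; elim=> [|n IH] q /=; first by rewrite inE => /eqP ->; exact: connect0.
rewrite mem_undup mem_cat => /orP [/IH //|/flattenP [l' /mapP [x Hx ->]]].
rewrite !inE => /orP [] /eqP ->; apply: connect_trans (IH _ Hx) (connect1 _);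
  by rewrite /map_step ?sf eqxx ?orbT.
Qed.

Lemma map_step_sym (T : finType) (s : {perm T * T}) x y :
  connect (map_step s) x y -> connect (map_step s) y x.
Proof.
apply: connect_sym_loc => {}x {}y /orP [] /eqP ->.
  have H : fconnect s (s x) x by rewrite fconnect_sym ?fconnect1 //; exact: perm_inj.
  apply: (connect_sub _ H) => a b /eqP <-; apply: connect1; by rewrite /map_step eqxx.
by apply: connect1; case: x => ? ?; rewrite /map_step /dart_rev /= eqxx orbT.
Qed.

Definition pcheck (T : finType) (e : rel T) (l : seq T) (f : T * T -> T * T)
  (p0 : T * T) (n : nat) : bool :=
 let L := allpairs pair l l in
 let N := size L in
 let phif := fun p => f (dart_rev p) in
 [&& uniq (map f L),
     all (fun p => e p.1 p.2 || (f p == p)) L,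
     all (fun p => (f p).1 == p.1) L,
     all (fun p => e p.1 p.2 ==> let t := traject f p N in all (fun q => (e q.1 q.2 && (p.1 == q.1)) ==> (q \in t)) L) L,
     e p0.1 p0.2,
     all (fun q => e q.1 q.2 ==> (q \in reach f n p0)) L &
     2 * count (fun x => has (e x) l) l + 2 * count (fun p => e p.1 p.2 && (let t := traject phif p N in let ip := index p L in all (fun q => e q.1 q.2 ==> (q \in t) ==> (ip <= index q L)) L)) L == count (fun p => e p.1 p.2) L + 4].

Lemma planar_check (T : finType) (e : rel T) (l : seq T) f p0 n :
  enumerates l -> pcheck e l f p0 n -> planar e.
Proof.
move=> El /andP [U /andP [C1 /andP [C2 /andP [C3 /andP [Dp0 /andP [C5 C6]]]]]].
set L := allpairs pair l l in U C1 C2 C3 C5 C6.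
have EL : enumerates L := pair_enumerates El.
have [uL tL] := EL.
set N := size L in C3 C6.
have finj : injective f := uniq_map_inj EL U.
set s := perm finj.
have sf : s =1 f := permE finj.
have revK : involutive (@dart_rev T) by case.
have NT : #|{: T * T}| <= N by rewrite (enum_size EL).
exists s; split.
- move=> p np; rewrite sf; have := allP C1 p (tL p); rewrite (negbTE np) /=; exact/eqP.
- by move=> p; rewrite sf; apply/eqP; exact: (allP C2 p (tL p)).
- move=> p q; rewrite !inE => ep eq E; rewrite (eq_fconnect sf).
  have := allP C3 p (tL p); rewrite ep /= => /allP /(_ q (tL q)); rewrite eq E eqxx /=.
  by move/trajectP => [i _ ->]; exact: fconnect_iter.
have -> : #|nonisolated e| = count (fun x => has (e x) l) l.
  rewrite (card_count _ El); apply: eq_count => x; rewrite !inE.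
  by apply/existsP/hasP => [[y Hy]|[y _ Hy]]; [exists y; [exact: El.2|] | exists y].
have -> : #|darts e| = count (fun p => e p.1 p.2) L.
  by rewrite (card_count _ EL); apply: eq_count => p; rewrite !inE.
have -> : ncomps e s = 1.
  rewrite /ncomps; set G := fun p => [set q in darts e | connect (map_step s) p q].
  have -> : [set G p | p in darts e] = [set G p0].
    apply/setP => A; rewrite inE; apply/imsetP/eqP => [[p Dp ->]|->]; last first.
      by exists p0; rewrite // inE.
    have c0p : connect (map_step s) p0 p.
      rewrite inE in Dp; apply: (reach_sound sf (n:=n)).
      by have := allP C5 p (tL p); rewrite Dp.
    have cp0 := map_step_sym c0p.
    apply/setP => q; rewrite !inE; case: (e q.1 q.2) => //=.
    by apply/idP/idP => h; [exact: connect_trans c0p h | exact: connect_trans cp0 h].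
  exact: cards1.
set phif := fun p => f (dart_rev p).
have Efc p q : fconnect (fun p => s (dart_rev p)) p q = (q \in traject phif p N).
  rewrite (@eq_fconnect _ _ phif); last by move=> r; rewrite /phif sf.
  exact: fconnect_traject.
have phis_inj : injective (fun p => s (dart_rev p)) by move=> p q /perm_inj /(can_inj revK).
have fsym : connect_sym (frel (fun p => s (dart_rev p))) by move=> x y; apply: fconnect_sym.
have -> : nfaces e s = #|[set [set q in darts e | q \in traject phif p N] | p in darts e]|.
  rewrite /nfaces; congr (#|pred_of_set _|); apply: eq_imset => p; apply/setP => q.
  by rewrite !inE Efc.
rewrite (count_classes (R := fun p q => q \in traject phif p N) EL); last first.
  move=> x y z _ _ _ /=; split; first by rewrite -Efc connect0.
  by move=> Hxy; rewrite -!Efc; apply: same_connect; rewrite ?Efc.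
rewrite muln1 -(eqP C6); congr (_ + 2 * _); apply: eq_count => p; rewrite !inE; congr (_ && _).
by apply: eq_all => q; rewrite !inE.
Qed.

Definition eq2 (V : eqType) (u v x y : V) := ((u == x) && (v == y)) || ((u == y) && (v == x)).

Lemma set2_eq (V : finType) (u v x y : V) : ([set u; v] == [set x; y]) = eq2 u v x y.
Proof.
apply/eqP/idP => [E|].
  have hu : u \in [set x; y] by rewrite -E !inE eqxx.
  have hv : v \in [set x; y] by rewrite -E !inE eqxx orbT.
  have hx : x \in [set u; v] by rewrite E !inE eqxx.
  have hy : y \in [set u; v] by rewrite E !inE eqxx orbT.
  move: hu hv hx hy; rewrite !inE /eq2.
  by do 4 (case/orP => /eqP ?); subst; rewrite ?eqxx ?orbT.
by rewrite /eq2; case/orP => /andP [/eqP -> /eqP ->] //; rewrite setUC.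
Qed.

Definition cplan (V : finType) (e : rel V) k (a b c d : 'I_k -> V) : rel (V + 'I_k) :=
  fun x y => match x, y with
  | inl u, inl v => e u v && ~~ has (fun i => eq2 u v (a i) (b i) || eq2 u v (c i) (d i)) (ords k)
  | inl u, inr i => [|| u == a i, u == b i, u == c i | u == d i]
  | inr i, inl u => [|| u == a i, u == b i, u == c i | u == d i]
  | _, _ => false
  end.

Lemma planarization_cplan (V : finType) (e : rel V) k (a b c d : 'I_k -> V) :
  planarization e a b c d = cplan e a b c d.
Proof.
apply: functional_extensionality => x; apply: functional_extensionality => y.
case: x => u; case: y => v //=; rewrite ?inE -?orbA //.
congr (_ && ~~ _); rewrite /crossed_edges.
apply/flattenP/hasP => [[s /mapP [i _ ->]] | [i _ H]].
  rewrite !inE => /orP [] /eqP E; exists i; rewrite ?(ords_enum k).2 //.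
    by rewrite -!set2_eq E eqxx.
  by rewrite -!set2_eq E eqxx orbT.
exists [:: [set a i; b i]; [set c i; d i]].
  by apply/mapP; exists i; rewrite ?mem_enum.
by move: H; rewrite -!set2_eq !inE => /orP [] /eqP ->; rewrite eqxx ?orbT.
Qed.

Definition npcheck (T : finType) (r : rel T) (l : seq T) : bool :=
  let L := allpairs pair l l in
  [&& all (fun x => all (fun y => r x y == r y x) l) l,
      all (fun x => ~~ r x x) l,
      all (fun x => all (fun y => r x y ==> has (fun z => (z != y) && r x z) l) l) l,
      has (fun p => r p.1 p.2) L &
      6 * size l < count (fun p => r p.1 p.2) L + 12].

Lemma nonplanar_check (T : finType) (r : rel T) (l : seq T) :
  enumerates l -> npcheck r l -> ~ planar r.
Proof.
move=> El /and5P [Cs Ci Cn Cd Cc] Hpl.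
have EL := pair_enumerates El.
have rsym : symmetric r by move=> x y; apply/eqP; exact: (allP (allP Cs x (El.2 x)) y (El.2 y)).
have rirr : irreflexive r by move=> x; apply/negbTE; exact: (allP Ci x (El.2 x)).
have rno x y : r x y -> exists2 z, z != y & r x z.
  move=> rxy; have := allP (allP Cn x (El.2 x)) y (El.2 y); rewrite rxy /= => /hasP [z _ /andP [H1 H2]].
  by exists z.
have [p0 _ Hp0] := hasP Cd.
have := euler_bound rsym rirr rno Hpl Hp0.
have -> : #|darts r| = count (fun p => r p.1 p.2) (allpairs pair l l).
  by rewrite (card_count _ EL); apply: eq_count => p; rewrite !inE.
have : #|nonisolated r| <= size l by rewrite -(enum_size El); apply: max_card.
lia.
Qed.

Lemma card_falseN (V : finType) k (a b c d : 'I_k -> V) i :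
  uniq [:: a i; b i; c i; d i] -> #|falseN a b c d i| = 4.
Proof.
move=> U; transitivity #|[:: a i; b i; c i; d i]|; last exact: (card_uniqP U).
by apply: eq_card => x; rewrite !inE -!orbA.
Qed.

Lemma k_le1 (V : finType) k (a b c d : 'I_k -> V) : #|V| < 8 ->
  (forall i, uniq [:: a i; b i; c i; d i]) ->
  (forall i j, i != j -> #|falseN a b c d i :&: falseN a b c d j| <= 0) -> k <= 1.
Proof.
move=> HV Hu Hd; rewrite leqNgt; apply/negP => Hk.
have H0 : 0 < k by apply: ltn_trans Hk.
pose i0 : 'I_k := Ordinal H0.
pose i1 : 'I_k := Ordinal Hk.
have := Hd i0 i1 isT; have := cardsU (falseN a b c d i0) (falseN a b c d i1).
rewrite !card_falseN // => Hu2 Hi.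
have := max_card (falseN a b c d i0 :|: falseN a b c d i1).
lia.
Qed.

Lemma notC0_gen (V : finType) (e : rel V) (lv : seq V) (v0 : V) :
  enumerates lv -> #|V| < 8 ->
  npcheck (cplan e (fun _ : 'I_0 => v0) (fun _ => v0) (fun _ => v0) (fun _ => v0))
          (map inl lv ++ map inr (ords 0)) ->
  all (fun a0 => all (fun b0 => all (fun c0 => all (fun d0 =>
     (e a0 b0 && e c0 d0 && uniq [:: a0; b0; c0; d0]) ==>
     npcheck (cplan e (fun _ : 'I_1 => a0) (fun _ => b0) (fun _ => c0) (fun _ => d0))
          (map inl lv ++ map inr (ords 1))) lv) lv) lv) lv ->
  ~ class_C0 e.
Proof.
move=> El HV C0 C1 [k [a [b [c [d [[Hab Hu _ Hpl] Hd]]]]]].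
have := k_le1 HV Hu Hd.
rewrite planarization_cplan in Hpl.
case: k a b c d Hab Hu Hpl Hd => [|[|k]] a b c d Hab Hu Hpl Hd // _.
  have E0 (f : 'I_0 -> V) : f = fun _ => v0.
    by apply: functional_extensionality => -[].
  rewrite (E0 a) (E0 b) (E0 c) (E0 d) in Hpl.
  exact: (nonplanar_check (sum_enumerates El (ords_enum 0)) C0 Hpl).
have E1 (f : 'I_1 -> V) : f = fun _ => f ord0.
  by apply: functional_extensionality => i; rewrite (ord1 i).
rewrite (E1 a) (E1 b) (E1 c) (E1 d) in Hpl.
apply: (nonplanar_check (sum_enumerates El (ords_enum 1))) Hpl.
have := allP (allP (allP (allP C1 _ (El.2 (a ord0))) _ (El.2 (b ord0))) _ (El.2 (c ord0))) _ (El.2 (d ord0)).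
by rewrite Hu; case/andP: (Hab ord0) => -> ->.
Qed.

Lemma enum_ords n : enum 'I_n = ords n.
Proof.
apply: (inj_map val_inj); rewrite val_enum_ord ordsE.
by rewrite -(val_enum_ord n) enumT unlock.
Qed.

Fixpoint uniq2 (V : eqType) (s : seq (V * V)) : bool :=
  if s is p :: s' then ~~ has (fun q => eq2 p.1 p.2 q.1 q.2) s' && uniq2 s' else true.

Lemma uniq2E (V : finType) (s : seq (V * V)) :
  uniq [seq [set p.1; p.2] | p <- s] = uniq2 s.
Proof.
elim: s => [|p s IH] //=; rewrite IH; congr (~~ _ && _).
apply/mapP/hasP => [[q Hq E]|[q Hq E]]; exists q => //.
  by rewrite -set2_eq E.
by apply/eqP; rewrite set2_eq.
Qed.

Definition mkf (T : eqType) (lt : seq T) (x0 : T) (tab : seq (nat * nat * nat)) (p : T * T) : T * T :=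
  let u := index p.1 lt in let v := index p.2 lt in
  match [seq t.2 | t <- tab & (t.1.1 == u) && (t.1.2 == v)] with
  | w :: _ => (p.1, nth x0 lt w)
  | [::] => p
  end.

Lemma C1_check (V : finType) (e : rel V) (lv : seq V) k (a b c d : 'I_k -> V) f p0 n :
  enumerates lv ->
  all (fun i => e (a i) (b i) && e (c i) (d i) && uniq [:: a i; b i; c i; d i]) (ords k) ->
  uniq2 (flatten [seq [:: (a i, b i); (c i, d i)] | i <- ords k]) ->
  pcheck (cplan e a b c d) (map inl lv ++ map inr (ords k)) f p0 n ->
  all (fun i => all (fun j => (i != j) ==> (count (fun x => (x \in [:: a i; b i; c i; d i]) && (x \in [:: a j; b j; c j; d j])) lv <= 1)) (ords k)) (ords k) ->
  has_drawing_le e 1.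
Proof.
move=> El C1 C2 C3 C4; exists k, a, b, c, d; split; first split.
- by move=> i; have /andP [] := allP C1 i ((ords_enum k).2 i).
- by move=> i; have /andP [] := allP C1 i ((ords_enum k).2 i).
- rewrite /crossed_edges enum_ords; move: C2; rewrite -uniq2E map_flatten -map_comp.
  by move=> H; apply: H.
- rewrite planarization_cplan.
  exact: (planar_check (sum_enumerates El (ords_enum k)) C3).
move=> i j nij; rewrite (card_count _ El).
have := allP (allP C4 i ((ords_enum k).2 i)) j ((ords_enum k).2 j); rewrite nij /=.
by congr (_ <= _); apply: eq_count => x; rewrite !inE -!orbA.
Qed.

Definition V1 := ('I_4 + 'I_3)%type.
Definition lv1 : seq V1 := map inl (ords 4) ++ map inr (ords 3).
Definition v01 : V1 := inl ord0.
Definition e1 := gjoin (path_rel 4) (path_rel 3).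
Definition lt1 : seq (V1 + 'I_2) := map inl lv1 ++ map inr (ords 2).
Definition a1 (i : 'I_2) : V1 := nth v01 lv1 (nth 0 [:: 0; 2] i).
Definition b1 (i : 'I_2) : V1 := nth v01 lv1 (nth 0 [:: 4; 5] i).
Definition c1 (i : 'I_2) : V1 := nth v01 lv1 (nth 0 [:: 1; 3] i).
Definition d1 (i : 'I_2) : V1 := nth v01 lv1 (nth 0 [:: 5; 6] i).
Definition tab1 : seq (nat * nat * nat) := [:: (0,1,6); (0,5,7); (0,6,5); (0,7,1); (1,0,7); (1,2,6); (1,4,2); (1,6,0); (1,7,4); (2,1,4); (2,3,8); (2,4,3); (2,6,1); (2,8,6); (3,2,4); (3,4,5); (3,5,8); (3,8,2); (4,1,7); (4,2,1); (4,3,2); (4,5,3); (4,7,5); (5,0,6); (5,3,4); (5,4,7); (5,6,8); (5,7,0); (5,8,3); (6,0,1); (6,1,2); (6,2,8); (6,5,0); (6,8,5); (7,0,5); (7,1,0); (7,4,1); (7,5,4); (8,2,3); (8,3,5); (8,5,6); (8,6,2)].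
Definition f1 := mkf lt1 (inl v01) tab1.
Definition p01 : (V1 + 'I_2) * (V1 + 'I_2) := (nth (inl v01) lt1 2, nth (inl v01) lt1 3).

Lemma El1 : enumerates lv1.
Proof. exact: (sum_enumerates (ords_enum 4) (ords_enum 3)). Qed.

Lemma G1_C1 : class_C1 e1.
Proof.
split.
  apply: (notC0_gen (v0 := v01) El1); first by rewrite (enum_size El1).
    by vm_compute.
  by vm_compute.
apply: (C1_check (a := a1) (b := b1) (c := c1) (d := d1) (f := f1) (p0 := p01) (n := 15) El1).
- by vm_compute.
- by vm_compute.
- by vm_compute.
- by vm_compute.
Qed.

Definition V2 := (('I_2 + 'I_2) + 'I_3)%type.
Definition lv2 : seq V2 := map inl (map inl (ords 2) ++ map inr (ords 2)) ++ map inr (ords 3).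
Definition v02 : V2 := inl (inl ord0).
Definition e2 := gjoin (dunion (path_rel 2) (path_rel 2)) (cycle_rel 3).
Definition lt2 : seq (V2 + 'I_2) := map inl lv2 ++ map inr (ords 2).
Definition a2 (i : 'I_2) : V2 := nth v02 lv2 (nth 0 [:: 0; 2] i).
Definition b2 (i : 'I_2) : V2 := nth v02 lv2 (nth 0 [:: 4; 4] i).
Definition c2 (i : 'I_2) : V2 := nth v02 lv2 (nth 0 [:: 1; 3] i).
Definition d2 (i : 'I_2) : V2 := nth v02 lv2 (nth 0 [:: 5; 6] i).
Definition tab2 : seq (nat * nat * nat) := [:: (0,1,7); (0,5,6); (0,6,1); (0,7,5); (1,0,6); (1,4,7); (1,6,4); (1,7,0); (2,3,8); (2,5,3); (2,6,5); (2,8,6); (3,2,5); (3,4,8); (3,5,4); (3,8,2); (4,1,6); (4,3,5); (4,5,7); (4,6,8); (4,7,1); (4,8,3); (5,0,7); (5,2,6); (5,3,2); (5,4,3); (5,6,0); (5,7,4); (6,0,5); (6,1,0); (6,2,8); (6,4,1); (6,5,2); (6,8,4); (7,0,1); (7,1,4); (7,4,5); (7,5,0); (8,2,3); (8,3,4); (8,4,6); (8,6,2)].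
Definition f2 := mkf lt2 (inl v02) tab2.
Definition p02 : (V2 + 'I_2) * (V2 + 'I_2) := (nth (inl v02) lt2 2, nth (inl v02) lt2 3).

Lemma El2 : enumerates lv2.
Proof.
exact: (sum_enumerates (sum_enumerates (ords_enum 2) (ords_enum 2)) (ords_enum 3)).
Qed.

Lemma G2_C1 : class_C1 e2.
Proof.
split.
  apply: (notC0_gen (v0 := v02) El2); first by rewrite (enum_size El2).
    by vm_compute.
  by vm_compute.
apply: (C1_check (a := a2) (b := b2) (c := c2) (d := d2) (f := f2) (p0 := p02) (n := 15) El2).
- by vm_compute.
- by vm_compute.
- by vm_compute.
- by vm_compute.
Qed.

Theorem lemma11 :
  class_C1 (gjoin (path_rel 4) (path_rel 3)) /\
  class_C1 (gjoin (dunion (path_rel 2) (path_rel 2)) (cycle_rel 3)).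
Proof. split; [exact: G1_C1 | exact: G2_C1]. Qed.
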